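(* Let $D$ be the diamond graph with $V=\{1,2,3,4\}$ and $E=\{\{1,2\},\{1,3\},\{2,3\},\{2,4\},\{3,4\}\}$, and let $\mathcal{Q}_{\mathrm{Gre}}(D)=\{q\in\mathbb{N}^4:q_iq_j=0\text{ for all }\{i,j\}\in E\}$. For $q=(q_1,q_2,q_3,q_4)$ let $\langle q\rangle=(q_1+q_4,q_2,q_3)$, and let $\langle i\rangle=i$ for $i\in\{1,2,3,\bot\}$ and $\langle4\rangle=1$. Let $\Phi_{\mathrm{Gre}}(K_3)$ be the deterministic size-based policy on the complete graph $K_3$ with nodes $\{1,2,3\}$ given by $\Phi_{\mathrm{Gre}}(K_3)(q,i)=j$ if $q_j\ge1$ for some $j\ne i$ and $\bot$ otherwise. Every greedy policy $\Phi$ adapted to $D$ satisfies: (i) if $\Phi$ is deterministic size-based, then $\langle\Phi(q,i)\rangle=\Phi_{\mathrm{Gre}}(K_3)(\langle q\rangle,\langle i\rangle)$ for all $(q,i)\in\mathcal{Q}_{\mathrm{Gre}}(D)\times V$; (ii) in general, if $\Phi$ has state space $(\mathcal{S},|\cdot|)$, then $\sum_{s'\in\mathcal{S}}\sum_{j\in V\cup\{\bot\}:\ \langle j\rangle=\Phi_{\mathrm{Gre}}(K_3)(\langle|s|\rangle,\langle i\rangle)}\Phi(s,i,j,s')=1$ for all $s\in\mathcal{S}$, $i\in V$; (iii) for every sequence $I=(I_t)$ of item classes, $\langle Q_t\rangle=(Q_{\mathrm{Gre}})_t$ for all $t\in\mathbb{N}$, where $Q$ and $Q_{\mathrm{Gre}}$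 are the queue-size processes of the models $(D,I,\Phi)$ and $(K_3,\langle I\rangle,\Phi_{\mathrm{Gre}}(K_3))$, with $\langle I\rangle=(\langle I_t\rangle)_t$.
   Context: Matching dynamics: items of classes $I_0,I_1,\dots$ arrive one at a time; a class-$i$ item can be matched with an unmatched class-$j$ item iff $\{i,j\}$ is an edge; matched items leave; the system starts empty. A (general) policy adapted to a graph: countable state space $\mathcal{S}$, map $|\cdot|:\mathcal{S}\to\mathbb{N}^n$ (unmatched items per class) with unique empty state $\varnothing$, and $\Phi(s,i,j,s')\in[0,1]$, the probability that an arriving class-$i$ item finding state $s$ is matched with class $j$ ($j=\bot$: left unmatched) and the new state is $s'$; $\Phi(s,i,j,s')>0$ only if $j\in\{j'\in V_i:|s|_{j'}\ge1\}\cup\{\bot\}$ ($V_i$ the neighbours of $i$) and $|s'|=|s|+\mathbf{1}_i$ if $j=\bot$, $|s|-\mathbf{1}_j$ otherwise; irreducible state chain from $\varnothing$. Deterministic size-based: $\mathcal{S}\subseteq\mathbb{N}^n$, $|\cdot|$ the identity, and the decision is a function $\Phi(q,i)\in V\cup\{\bot\}$. Greedy: no arriving item is left unmatched while a compatible item is waiting (so queue-size vectors lie in $\mathcal{Q}_{\mathrm{Gre}}$). Queue-size process: $Q_t=|S_t|$ after the first $t$ arrivals. *)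

(* Defs.v *)
From HB Require Import structures.
From mathcomp Require Import all_boot all_order all_algebra.
From mathcomp Require Import boolp classical_sets reals constructive_ereal ereal esum.
From Stdlib Require Import Relations.
Set Implicit Arguments.
Unset Strict Implicit.
Unset Printing Implicit Defensive.
Import Order.TTheory GRing.Theory Num.Theory.

Local Open Scope ring_scope.

(* relation [adj].  The "unmatched" decision bot is [None : option _]. *)

Definition qvec (n : nat) := {ffun 'I_n -> nat}.

Definition qzero (n : nat) : qvec n := [ffun => 0%N].

Definition qupd (n : nat) (q : qvec n) (i : 'I_n) (j : option 'I_n) : qvec n :=
  match j with
  | None => [ffun k => (q k + (k == i))%N]
  | Some j' => [ffun k => (q k - (k == j'))%N]
  end.

Definition greedy_qvec (n : nat) (adj : rel 'I_n) (q : qvec n) : Prop :=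
  forall i j, adj i j -> (q i * q j = 0)%N.

(* A general policy is given by a countable state space S, a size map
   size : S -> N^n, an empty state, and
   Phi s i j s' = probability that a class-i arrival in state s is matched
   with j (None = left unmatched) and the new state is s'. *)

Definition pstep (R : realType) (n : nat) (S : countType)
  (Phi : S -> 'I_n -> option 'I_n -> S -> R) (s s' : S) : Prop :=
  exists i j, 0 < Phi s i j s'.

Definition adapted (R : realType) (n : nat) (adj : rel 'I_n) (S : countType)
  (size : S -> qvec n) (empty : S)
  (Phi : S -> 'I_n -> option 'I_n -> S -> R) : Prop :=
  [/\
      (forall s i j s', 0 <= Phi s i j s' <= 1),
      (forall s i,
         (\esum_(s' in [set: S]) ((\sum_(j : option 'I_n) Phi s i j s')%:E))%E
         = 1%E),
      (forall s i j s', 0 < Phi s i j s' ->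
         match j with
         | None => True
         | Some j' => adj i j' && (0 < size s j')%N
         end /\ size s' = qupd (size s) i j),
      (size empty = qzero n /\ forall s, size s = qzero n -> s = empty)
    &
      (forall s s', clos_refl_trans S (pstep Phi) s s')].

Definition greedy (R : realType) (n : nat) (adj : rel 'I_n) (S : countType)
  (size : S -> qvec n) (Phi : S -> 'I_n -> option 'I_n -> S -> R) : Prop :=
  forall s i s', 0 < Phi s i None s' -> forall j, adj i j -> size s j = 0%N.

(* Phi is deterministic size-based with decision function phi:
   states are identified with their queue-size vectors (size injective,
   i.e. S is a subset of N^n and |.| the identity) and the arrival of class i
   in state q deterministically leads to decision phi q i. *)
Definition det_size_based (R : realType) (n : nat) (S : countType)
  (size : S -> qvec n) (Phi : S -> 'I_n -> option 'I_n -> S -> R)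
  (phi : qvec n -> 'I_n -> option 'I_n) : Prop :=
  injective size /\
  forall s i j s',
    Phi s i j s' =
      (if (j == phi (size s) i) && (size s' == qupd (size s) i j) then 1 else 0).

Fixpoint qdet (n : nat) (phi : qvec n -> 'I_n -> option 'I_n)
  (I : nat -> 'I_n) (t : nat) : qvec n :=
  match t with
  | 0 => qzero n
  | t'.+1 => let q := qdet phi I t' in qupd q (I t') (phi q (I t'))
  end.

(* Paper node k (k = 1..4) is the ordinal k-1.                         *)

Definition adjD : rel 'I_4 := fun i j =>
  ((minn i j, maxn i j) \in [:: (0,1); (0,2); (1,2); (1,3); (2,3)]%N).

Definition adjK3 : rel 'I_3 := fun i j => i != j.

Definition projq (q : qvec 4) : qvec 3 :=
  [ffun k : 'I_3 =>
     (q (widen_ord (leqnSn 3) k) + (if k == ord0 then q (inord 3) else 0))%N].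

Definition projnode (i : 'I_4) : 'I_3 :=
  if (i : nat) == 3%N then ord0 else inord i.

Definition projdec (j : option 'I_4) : option 'I_3 := omap projnode j.

Definition phiGreK3 (q : qvec 3) (i : 'I_3) : option 'I_3 :=
  [pick j | (j != i) && (0 < q j)%N].

(* Main.v *)
Require Import Defs.
From HB Require Import structures.
From mathcomp Require Import all_boot all_order all_algebra.
From mathcomp Require Import boolp classical_sets reals constructive_ereal ereal esum.
From Stdlib Require Import Relations.
From mathcomp Require Import zify.
Import Order.TTheory GRing.Theory Num.Theory.
Local Open Scope ring_scope.
Definition pn (i : nat) : nat := if i == 3%N then 0%N else i.
Definition adjN (i j : nat) : bool := ((minn i j, maxn i j) \in [:: (0,1); (0,2); (1,2); (1,3); (2,3)]%N).
Definition An (a0 a1 a2 a3 : bool) (k : nat) := nth false [:: a0; a1; a2; a3] k.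
Definition Bn (a0 a1 a2 a3 : bool) (k : nat) := nth false [:: a0 || a3; a1; a2] k.
Definition greedyN a0 a1 a2 a3 :=
  all (fun x => all (fun y => adjN x y ==> ~~ (An a0 a1 a2 a3 x && An a0 a1 a2 a3 y)) (iota 0 4)) (iota 0 4).

Lemma checkSome a0 a1 a2 a3 : greedyN a0 a1 a2 a3 ->
  all (fun i => all (fun j => adjN i j ==> An a0 a1 a2 a3 j ==>
     ((pn j != pn i) && Bn a0 a1 a2 a3 (pn j) &&
      all (fun y => ((y != pn i) && Bn a0 a1 a2 a3 y) ==> (y == pn j)) (iota 0 3)))
   (iota 0 4)) (iota 0 4).
Proof. by case: a0; case: a1; case: a2; case: a3. Qed.

Lemma checkNone a0 a1 a2 a3 : greedyN a0 a1 a2 a3 ->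
  all (fun i => all (fun k => adjN i k ==> ~~ An a0 a1 a2 a3 k) (iota 0 4) ==>
     all (fun y => ~~ ((y != pn i) && Bn a0 a1 a2 a3 y)) (iota 0 3)) (iota 0 4).
Proof. by case: a0; case: a1; case: a2; case: a3. Qed.

Lemma projnode_val (i : 'I_4) : val (projnode i) = pn i.
Proof. rewrite /projnode /pn; case: ifP => // H; apply: inordK; case: i H => [[|[|[|[|]]]]] //=. Qed.

Lemma adjD_N (i j : 'I_4) : adjD i j = adjN i j.
Proof. by []. Qed.

Definition qn (q : qvec 4) (n : nat) : nat := q (inord n).
Lemma qE (q : qvec 4) (x : 'I_4) : q x = qn q x.
Proof. by rewrite /qn inord_val. Qed.

Lemma projq_pos (q : qvec 4) (y : 'I_3) :
  (0 < projq q y)%N = Bn (0 < qn q 0)%N (0 < qn q 1)%N (0 < qn q 2)%N (0 < qn q 3)%N y.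
Proof.
rewrite /projq ffunE qE [q (inord 3)]qE /= -val_eqE /=.
case: y => [[|[|[|]]] Hy] //=; rewrite /Bn /= ?addn0 // inordK // addn_gt0 //.
Qed.

Lemma allIota n (P : pred nat) : all P (iota 0 n) -> forall x, (x < n)%N -> P x.
Proof. by move/allP=> H x Hx; apply: H; rewrite mem_iota. Qed.
Arguments allIota {n P}.

Lemma An_qn (q : qvec 4) x : (x < 4)%N ->
  An (0 < qn q 0)%N (0 < qn q 1)%N (0 < qn q 2)%N (0 < qn q 3)%N x = (0 < qn q x)%N.
Proof. by case: x => [|[|[|[|]]]]. Qed.

Lemma pick_some (T : finType) (P : pred T) x : P x -> (forall y, P y -> y = x) -> [pick y | P y] = Some x.
Proof. by move=> Px Hu; case: pickP => [y Py|H]; [rewrite (Hu y Py) | rewrite H in Px]. Qed.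

Lemma pick_none (T : finType) (P : pred T) : (forall y, ~~ P y) -> [pick y | P y] = None.
Proof. by move=> H; case: pickP => // y Py; move: (H y); rewrite Py. Qed.

Definition valid (q : qvec 4) (i : 'I_4) (j : option 'I_4) : Prop :=
  match j with None => forall k, adjD i k -> q k = 0%N | Some j' => adjD i j' && (0 < q j')%N end.

Lemma core q i j : greedy_qvec adjD q -> valid q i j ->
  projdec j = phiGreK3 (projq q) (projnode i).
Proof.
move=> G V.
have GN : greedyN (0 < qn q 0)%N (0 < qn q 1)%N (0 < qn q 2)%N (0 < qn q 3)%N.
  apply/allP => x; rewrite mem_iota => /andP[_ Hx]; apply/allP => y; rewrite mem_iota => /andP[_ Hy].
  apply/implyP => Hadj.
  have := G (inord x) (inord y); rewrite adjD_N !inordK // => /(_ Hadj).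
  rewrite !An_qn // /qn; move/eqP; rewrite muln_eq0 => /orP[] /eqP ->; first by [].
  by rewrite andbF.
rewrite /phiGreK3; case: j V => [j'|] /= V.
- have := allIota (allIota (@checkSome _ _ _ _ GN) _ (ltn_ord i)) _ (ltn_ord j').
  case/andP: V; rewrite adjD_N qE => Ha Hp.
  move=> /implyP/(_ Ha) /implyP; rewrite An_qn // => /(_ Hp) /andP[/andP[Hne HB] Hall].
  symmetry; apply: pick_some.
    by rewrite -val_eqE !projnode_val projq_pos projnode_val Hne HB.
  move=> y /andP[]; rewrite -val_eqE projnode_val projq_pos => H1 H2.
  apply/val_inj; rewrite projnode_val; apply/eqP.
  by have := allIota Hall _ (ltn_ord y); rewrite H1 H2.
- have HN : all (fun k => adjN i k ==> ~~ An (0 < qn q 0)%N (0 < qn q 1)%N (0 < qn q 2)%N (0 < qn q 3)%N k) (iota 0 4).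
    apply/allP => k; rewrite mem_iota => /andP[_ Hk]; apply/implyP => Ha.
    rewrite An_qn //; have := V (inord k); rewrite adjD_N inordK // => /(_ Ha).
    by rewrite /qn => ->.
  have := allIota (@checkNone _ _ _ _ GN) _ (ltn_ord i); move=> /implyP/(_ HN) Hall.
  symmetry; apply: pick_none => y.
  rewrite -val_eqE projnode_val projq_pos.
  exact: allIota Hall _ (ltn_ord y).
Qed.
Arguments core {q i j}.

Lemma projq_qupd (q : qvec 4) (i : 'I_4) (j : option 'I_4) : (forall j', j = Some j' -> (0 < q j')%N) ->
  projq (qupd q i j) = qupd (projq q) (projnode i) (projdec j).
Proof.
move=> H; apply/ffunP => y.
case: j H => [j'|] H; rewrite /projq /qupd /= !ffunE.
- have := H j' erefl; rewrite !qE -!val_eqE /= !projnode_val.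
  rewrite inordK //.
  by case: y => [[|[|[|]]] ?]; case: j' {H} => [[|[|[|[|]]]] ?] //= Hp; lia.
- rewrite !qE -!val_eqE /= !projnode_val inordK //.
  by case: y => [[|[|[|]]] ?]; case: i => [[|[|[|[|]]]] ?] //=; lia.
Qed.

Lemma adjD_sym (x y : 'I_4) : adjD x y -> adjD y x.
Proof. by rewrite /adjD minnC maxnC. Qed.

Lemma adjD_irr (x : 'I_4) : adjD x x = false.
Proof. by rewrite /adjD minnn maxnn; case: x => [[|[|[|[|]]]] ?]. Qed.

Lemma greedy_some (q : qvec 4) i k : greedy_qvec adjD q -> greedy_qvec adjD (qupd q i (Some k)).
Proof.
move=> G x y Hxy /=; rewrite !ffunE.
move: (G x y Hxy) => /eqP; rewrite muln_eq0 => /orP[/eqP -> | /eqP ->].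
  by rewrite sub0n mul0n.
by rewrite sub0n muln0.
Qed.

Lemma greedy_step q i j : greedy_qvec adjD q -> valid q i j -> greedy_qvec adjD (qupd q i j).
Proof.
move=> G V; case: j V => [j'|] V; first exact: greedy_some.
move=> x y Hxy /=; rewrite !ffunE.
- case: (eqVneq x i) => [Exi|Hxi]; case: (eqVneq y i) => [Eyi|Hyi] /=.
  + by move: Hxy; rewrite Exi Eyi adjD_irr.
  + by rewrite (V y) ?muln0 // -Exi.
  + by rewrite (V x) ?mul0n // -Eyi adjD_sym.
  + by rewrite !addn0 G.
Qed.

Lemma nonneg_zero (R : realType) (x : R) : 0 <= x -> ~ 0 < x -> x = 0.
Proof. by move=> H0 H; apply/eqP; rewrite eq_le H0 andbT leNgt; apply/negP. Qed.

Lemma valid_of (R : realType) (S : countType) (size : S -> qvec 4)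
  (empty : S) (Phi : S -> 'I_4 -> option 'I_4 -> S -> R) :
  adapted adjD size empty Phi -> greedy adjD size Phi ->
  forall s i j s', 0 < Phi s i j s' -> valid (size s) i j /\ size s' = qupd (size s) i j.
Proof.
case=> Hprob Hsum Hsupp [Hemp Huniq] Hirr Gr s i j s' Hp.
have [Hv Hs] := Hsupp s i j s' Hp; split => //.
case: j Hp Hv {Hs} => [j'|] Hp Hv //= k Hk.
exact: Gr Hp k Hk.
Qed.
Arguments valid_of {R S size empty Phi}.

Lemma all_greedy (R : realType) (S : countType) (size : S -> qvec 4)
  (empty : S) (Phi : S -> 'I_4 -> option 'I_4 -> S -> R) :
  adapted adjD size empty Phi -> greedy adjD size Phi ->
  forall s, greedy_qvec adjD (size s).
Proof.
move=> Ad Gr s; case: (Ad) => Hprob Hsum Hsupp [Hemp Huniq] Hirr.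
have : greedy_qvec adjD (size empty) by move=> x y _; rewrite Hemp !ffunE.
elim: (Hirr empty s) => [x y [i [j Hp]]|x|x y z _ IH1 _ IH2].
- have [Hv ->] := valid_of Ad Gr _ _ _ _ Hp. move=> Gx; exact: greedy_step Gx Hv.
- by [].
- by move=> /IH1 /IH2.
Qed.
Arguments all_greedy {R S size empty Phi}.

Lemma exists_pos (R : realType) (S : countType) (size : S -> qvec 4)
  (empty : S) (Phi : S -> 'I_4 -> option 'I_4 -> S -> R) :
  adapted adjD size empty Phi ->
  forall s i, exists j s', 0 < Phi s i j s'.
Proof.
case=> Hprob Hsum Hsupp [Hemp Huniq] Hirr s i.
have [//|H] := pselect (exists j s', 0 < Phi s i j s').
exfalso; move: (Hsum s i).
rewrite esum1; last first.
  move=> s' _; congr EFin; apply: big1 => j _.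
  apply: nonneg_zero; first by case/andP: (Hprob s i j s').
  by move=> Hp; apply: H; exists j, s'.
by move=> [] /esym/eqP; rewrite oner_eq0.
Qed.
Arguments exists_pos {R S size empty Phi}.

Lemma sum_pos (R : realType) (F : option 'I_4 -> R) :
  (forall j, 0 <= F j) -> 0 < \sum_j F j -> exists j, 0 < F j.
Proof.
move=> H0 Hp; have [//|H] := pselect (exists j, 0 < F j).
exfalso; suff E : \sum_j F j = 0 by rewrite E ltxx in Hp.
apply: big1 => j _; apply: nonneg_zero => // Hj; apply: H; by exists j.
Qed.
Arguments sum_pos {R F}.

Lemma reach (R : realType) (S : countType) (size : S -> qvec 4)
  (empty : S) (Phi : S -> 'I_4 -> option 'I_4 -> S -> R) :
  adapted adjD size empty Phi -> greedy adjD size Phi ->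
  forall q, greedy_qvec adjD q -> exists s, size s = q.
Proof.
move=> Ad Gr q G; case: (Ad) => Hprob Hsum Hsupp [Hemp Huniq] Hirr.
move: {2}(\sum_k q k)%N (leqnn (\sum_k q k)%N) => n.
elim: n q G => [|n IH] q G Hs.
  exists empty; rewrite Hemp; apply/ffunP => k; rewrite !ffunE.
  apply/esym/eqP; rewrite -leqn0; apply: leq_trans Hs.
  by rewrite (bigD1 k) //= leq_addr.
case: (pickP (fun k => 0 < q k)%N) => [k Hk | Hn]; last first.
  exists empty; rewrite Hemp; apply/ffunP => k; rewrite !ffunE.
  by move: (Hn k) => /= /negbT; rewrite lt0n negbK => /eqP.
set q' := qupd q k (Some k).
have G' : greedy_qvec adjD q' by apply: greedy_some.
have Hs' : (\sum_x q' x <= n)%N.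
  rewrite /q' /=; move: Hs; rewrite (bigD1 k) //= [X in (X <= n)%N](bigD1 k) //= ffunE eqxx.
  move=> H; under eq_bigr => x Hx do rewrite ffunE (negbTE Hx) subn0.
  move: Hk => /= Hk; lia.
have [s Es] := IH q' G' Hs'.
have [j [s' Hp]] := exists_pos Ad s k.
have [Hv Hs''] := valid_of Ad Gr _ _ _ _ Hp.
rewrite Es in Hv Hs''.
case: j Hp Hv Hs'' => [j'|] Hp Hv Hs''.
  case/andP: Hv => Hadj; rewrite /q' /= ffunE => Hj.
  have := G k j' Hadj; move: Hk Hj => /= Hk Hj; nia.
exists s'; rewrite Hs''; apply/ffunP => x; rewrite /q' /= !ffunE.
case: (eqVneq x k) => [->|Hx] /=; move: Hk => /= Hk; lia.
Qed.
Arguments reach {R S size empty Phi}.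

Theorem proposition6p6 (R : realType) (S : countType) (size : S -> qvec 4)
  (empty : S) (Phi : S -> 'I_4 -> option 'I_4 -> S -> R) :
  adapted adjD size empty Phi ->
  greedy adjD size Phi ->
  [/\ (* (i) *)
      (forall phi : qvec 4 -> 'I_4 -> option 'I_4,
         det_size_based size Phi phi ->
         forall q i, greedy_qvec adjD q ->
           projdec (phi q i) = phiGreK3 (projq q) (projnode i)),
      (* (ii) *)
      (forall s i,
         (\esum_(s' in [set: S])
            ((\sum_(j : option 'I_4 |
                      projdec j == phiGreK3 (projq (size s)) (projnode i))
                Phi s i j s')%:E))%E = 1%E)
    & (* (iii): almost surely, i.e. along every state path of positive
         probability, <Q_t> = (Q_Gre)_t *)
      (forall (I : nat -> 'I_4) (t : nat) (path : nat -> S),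
         path 0%N = empty ->
         (forall u, (u < t)%N -> 0 < \sum_(j : option 'I_4) Phi (path u) (I u) j (path u.+1)) ->
         projq (size (path t)) = qdet phiGreK3 (fun u => projnode (I u)) t)].
Proof.
move=> Ad Gr; have AG := all_greedy Ad Gr.
case: (Ad) => Hprob Hsum Hsupp [Hemp Huniq] Hirr.
split.
- move=> phi [Hinj Hdet] q i G.
  have [s Es] := reach Ad Gr q G.
  have [j [s' Hp]] := exists_pos Ad s i.
  have [Hv _] := valid_of Ad Gr _ _ _ _ Hp.
  move: Hp; rewrite Hdet; case: ifP => [/andP[/eqP Ej _]|] _; last by rewrite ltxx.
  rewrite -Es -Ej; exact: core (AG s) Hv.
- move=> s i; rewrite -(Hsum s i); apply: eq_esum => s' _; congr EFin.
  rewrite [RHS](bigID (fun j => projdec j == phiGreK3 (projq (size s)) (projnode i))) /=.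
  rewrite [X in _ = _ + X]big1 ?addr0 // => j Hj.
  apply: nonneg_zero; first by case/andP: (Hprob s i j s').
  move=> Hp; have [Hv _] := valid_of Ad Gr _ _ _ _ Hp.
  by rewrite (core (AG s) Hv) eqxx in Hj.
- move=> I t path H0; elim: t => [|t IH] Hpos.
    rewrite H0 Hemp /=; apply/ffunP => k; rewrite !ffunE; by case: (k == ord0).
  have IH' := IH (fun u Hu => Hpos u (ltn_trans Hu (ltnSn t))).
  have [j Hp] := sum_pos (fun j => proj1 (andP (Hprob _ _ j _))) (Hpos t (ltnSn t)).
  have [Hv Es] := valid_of Ad Gr _ _ _ _ Hp.
  rewrite /= -IH' Es projq_qupd; last first.
    by move=> j' Ej; move: Hv; rewrite Ej => /andP[].
  by rewrite (core (AG _) Hv).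
Qed.
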